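(* Let $X$ be a non-negative absolutely continuous random variable with PDF $f$, and write $l=\alpha\beta-\alpha-\beta+2$ and $G_{l}(X)=\int_0^\infty f^{l}(x)\,dx$. Let $\delta(\alpha)=\frac{1}{1-\alpha}$. (A) If $0<\alpha<1$, then: $R^\alpha_\beta(X)\le \delta(\alpha)G_{l}(X)$ if $0<\beta<1$ or $\beta\ge 2$; $R^\alpha_\beta(X)\ge \frac12 R^{\frac{\alpha+1}{2}}_{2\beta-1}(X)$ if $\beta\ge1$; and $R^\alpha_\beta(X)\le \frac12 R^{\frac{\alpha+1}{2}}_{2\beta-1}(X)$ if $0<\beta<1$. (B) If $\alpha>1$, then: $R^\alpha_\beta(X)\le \delta(\alpha)G_{l}(X)$ if $1<\beta<2$; $R^\alpha_\beta(X)\le \frac12 R^{\frac{\alpha+1}{2}}_{2\beta-1}(X)$ if $\beta\ge1$; and $R^\alpha_\beta(X)\ge \frac12 R^{\frac{\alpha+1}{2}}_{2\beta-1}(X)$ if $0<\beta<1$.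
   Context: For a non-negative absolutely continuous random variable $X$ with PDF $f$, $0<\alpha<\infty$, $\alpha\ne1$, $\beta>0$, the Rényi information generating function is $R^\alpha_\beta(X)=\frac{1}{1-\alpha}\left(\int_0^\infty f^\alpha(x)\,dx\right)^{\beta-1}$. $G_\gamma(X)=\int_0^\infty f^\gamma(x)dx$ is Golomb's information generating function. All integrals involved are assumed to exist and be finite. *)

(* Defs.v *)
From HB Require Import structures.
From mathcomp Require Import all_boot all_order all_algebra.
From mathcomp Require Import all_classical all_reals all_analysis.
Set Implicit Arguments. Unset Strict Implicit. Unset Printing Implicit Defensive.
Import Order.TTheory GRing.Theory Num.Theory.
Local Open Scope classical_set_scope.
Local Open Scope ring_scope.

Definition nonneg_pdf (R : realType) (f : R -> R) : Prop :=
  [/\ measurable_fun setT f,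
      (forall x, 0 <= f x),
      (forall x, x < 0 -> f x = 0),
      (@lebesgue_measure R).-integrable setT (fun x => (f x)%:E) &
      (\int[@lebesgue_measure R]_(x in setT) (f x)%:E = 1)%E].

Definition igf_finite (R : realType) (f : R -> R) (g : R) : Prop :=
  (@lebesgue_measure R).-integrable `[0, +oo[ (fun x => (f x `^ g)%:E).

Definition golomb_igf (R : realType) (f : R -> R) (g : R) : R :=
  Rintegral (@lebesgue_measure R) `[0, +oo[ (fun x => f x `^ g).

Definition renyi_igf (R : realType) (f : R -> R) (a b : R) : R :=
  (1 - a)^-1 * (golomb_igf f a) `^ (b - 1).

(* Main.v *)
Require Import Defs.
From HB Require Import structures.
From mathcomp Require Import all_boot all_order all_algebra.
From mathcomp Require Import all_classical all_reals all_analysis.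
From mathcomp Require Import ring lra.
Import Order.TTheory GRing.Theory Num.Theory.
Local Open Scope ring_scope.
Set Implicit Arguments. Unset Strict Implicit. Unset Printing Implicit Defensive.

Lemma bern_convex (R : realType) (u p : R) : 0 < u -> (1 <= p \/ p <= 0) ->
  1 + p * (u - 1) <= u `^ p.
Proof.
move=> u0 [p1|p0].
  have [->|p1'] := eqVneq p 1; first by rewrite powRr1; [lra | exact: ltW].
  have p1s : 1 < p by rewrite lt_neqAle eq_sym p1' p1.
  have p0 : 0 < p by lra.
  have pi1 : p^-1 < 1 by rewrite invf_lt1.
  have pi0 : 0 < p^-1 by rewrite invr_gt0.
  have q0 : 0 < (1 - p^-1)^-1 by rewrite invr_gt0; lra.
  have := @conjugate_powR R u 1 p (1 - p^-1)^-1 (ltW u0) ler01 p0 q0.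
  rewrite invrK mulr1 powR1 => /(_ ltac:(lra)) H.
  have e : p * (u `^ p / p + (1 - p^-1)) = u `^ p + (p - 1).
    by field; rewrite gt_eqF.
  have H2 := ler_wpM2l (ltW p0) H.
  rewrite mul1r e in H2.
  lra.
rewrite /powR gt_eqF //.
apply: le_trans (expR_ge1Dx _).
rewrite lerD2l.
have : ln u <= u - 1.
  have := @le_ln1Dx R (u - 1) ltac:(lra). by rewrite addrC subrK.
move=> H; nra.
Qed.

Lemma bern_concave (R : realType) (u p : R) : 0 < u -> 0 <= p <= 1 ->
  u `^ p <= 1 + p * (u - 1).
Proof.
move=> u0 /andP[p0 p1].
have [->|p0'] := eqVneq p 0; first by rewrite powRr0 mul0r addr0.
have [->|p1'] := eqVneq p 1; first by rewrite powRr1; [lra | exact: ltW].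
have pp : 0 < p by rewrite lt_neqAle eq_sym p0' p0.
have pl : p < 1 by rewrite lt_neqAle p1' p1.
have H := @conjugate_powR R (u `^ p) 1 p^-1 (1 - p)^-1 (powR_ge0 _ _) ler01
  ltac:(by rewrite invr_gt0) ltac:(by rewrite invr_gt0 subr_gt0)
  ltac:(by rewrite !invrK; lra).
rewrite mulr1 powR1 -powRrM divff ?gt_eqF // powRr1 in H; last exact: ltW.
rewrite !invrK in H; lra.
Qed.

Lemma tangent_convex (R : realType) (y m p : R) : 0 < y -> 0 < m ->
  (1 <= p \/ p <= 0) -> m `^ p + p * (m `^ p / m) * (y - m) <= y `^ p.
Proof.
move=> y0 m0 hp.
have u0 : 0 < y / m by rewrite divr_gt0.
have := @bern_convex R _ p u0 hp.
move=> H.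
have ey : y `^ p = m `^ p * (y / m) `^ p.
  by rewrite -powRM ?(ltW m0) ?(ltW u0) // mulrC divfK ?gt_eqF.
rewrite ey.
have mp : 0 < m `^ p by rewrite powR_gt0.
have H2 := ler_wpM2l (ltW mp) H.
apply: le_trans H2; rewrite le_eqVlt; apply/orP; left; apply/eqP.
by field; rewrite gt_eqF.
Qed.

Lemma tangent_concave (R : realType) (y m p : R) : 0 < y -> 0 < m ->
  0 <= p <= 1 -> y `^ p <= m `^ p + p * (m `^ p / m) * (y - m).
Proof.
move=> y0 m0 hp.
have u0 : 0 < y / m by rewrite divr_gt0.
have := @bern_concave R _ p u0 hp.
move=> H.
have ey : y `^ p = m `^ p * (y / m) `^ p.
  by rewrite -powRM ?(ltW m0) ?(ltW u0) // mulrC divfK ?gt_eqF.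
rewrite ey.
have mp : 0 < m `^ p by rewrite powR_gt0.
have H2 := ler_wpM2l (ltW mp) H.
apply: le_trans H2 _; rewrite le_eqVlt; apply/orP; left; apply/eqP.
by field; rewrite gt_eqF.
Qed.

Local Notation mu := (@lebesgue_measure _).

Lemma pdf_int (R : realType) (f : R -> R) : nonneg_pdf f ->
  mu.-integrable `[0, +oo[%classic (EFin \o f) /\
  Rintegral mu `[0, +oo[%classic f = 1.
Proof.
case=> mf f0 fn intf I1; split.
  apply: integrableS intf => //.
rewrite /Rintegral.
have -> : (\int[mu]_(x in `[0%R, +oo[%classic) (f x)%:E = 
          \int[mu]_(x in setT) (f x)%:E)%E.
  rewrite integral_mkcond; apply: eq_integral => x _.
  rewrite patchE; case: ifPn => // /negP xD.
  rewrite fn //; rewrite ltNge; apply/negP => x0; apply: xD.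
  by rewrite inE /= in_itv /= andbT.
by rewrite I1.
Qed.

Lemma G_pos (R : realType) (f : R -> R) (g : R) : nonneg_pdf f ->
  igf_finite f g -> 0 < golomb_igf f g.
Proof.
move=> pdf ig.
have [intf I1] := pdf_int pdf.
case: pdf => mf f0 fn _ _.
rewrite /golomb_igf /Rintegral.
set I := (\int[mu]_(x in _) _)%E.
have I0 : (0 <= I)%E by apply: integral_ge0 => x _; rewrite lee_fin powR_ge0.
have Ifin : I \is a fin_num by exact: integrable_fin_num.
rewrite lt_neqAle fine_ge0 // andbT; apply/negP => /eqP /esym I0'.
have II : I = 0%E by rewrite -(fineK Ifin) I0'.
have [mfg _] := integrableP _ _ _ ig.
have ae1 : ae_eq mu (`[0%R, +oo[%classic : set R) (fun x => (f x `^ g)%:E) (cst 0%E).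
  apply/ae_eq_integral_abs => //.
  rewrite -II; apply: eq_integral => x _.
  by rewrite gee0_abs // lee_fin powR_ge0.
have ae2 : ae_eq mu (`[0%R, +oo[%classic : set R) (fun x => (f x)%:E) (cst 0%E).
  apply: filterS ae1 => x H Dx; have := H Dx => /= [[/powR_eq0_eq0 ->]].
  by [].
have [mfD _] := integrableP _ _ _ intf.
have := @ae_eq_integral _ _ _ mu _ (cst 0%E) _ _ mfD (measurable_cst _) ae2.
rewrite integral0 => H0.
move: I1; rewrite /Rintegral /comp H0 /=.
by move/eqP; rewrite eq_sym oner_eq0.
exact: measurable_itv.
Qed.

Local Notation D := (`[0%R, +oo[%classic).
Lemma int_lin (R : realType) (f1 f2 : R -> R) (a b : R) :
  mu.-integrable D (EFin \o f1) -> mu.-integrable D (EFin \o f2) ->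
  mu.-integrable D (EFin \o (fun x => a * f1 x + b * f2 x)) /\
  Rintegral mu D (fun x => a * f1 x + b * f2 x) =
    a * Rintegral mu D f1 + b * Rintegral mu D f2.
Proof.
move=> i1 i2.
have j1 : mu.-integrable D (EFin \o (fun x => a * f1 x)).
  have -> : EFin \o (fun x => a * f1 x) = (fun x => a%:E * (EFin \o f1) x)%E.
    by apply/funext => x /=; rewrite EFinM.
  exact: integrableZl.
have j2 : mu.-integrable D (EFin \o (fun x => b * f2 x)).
  have -> : EFin \o (fun x => b * f2 x) = (fun x => b%:E * (EFin \o f2) x)%E.
    by apply/funext => x /=; rewrite EFinM.
  exact: integrableZl.
split.
  have -> : EFin \o (fun x => a * f1 x + b * f2 x) =
    (EFin \o (fun x => a * f1 x)) \+ (EFin \o (fun x => b * f2 x)).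
    by apply/funext => x /=; rewrite EFinD.
  exact: integrableD.
rewrite (RintegralD _ j1 j2) ?RintegralZl //; exact: measurable_itv.
Qed.

Lemma CS (R : realType) (f : R -> R) (alpha : R) : nonneg_pdf f -> 0 < alpha ->
  igf_finite f alpha -> igf_finite f ((alpha + 1) / 2) ->
  golomb_igf f ((alpha + 1) / 2) ^+ 2 <= golomb_igf f alpha.
Proof.
move=> pdf a0 ia im.
have Gp := G_pos pdf ia.
have Gm0 := G_pos pdf im.
have [intf I1] := pdf_int pdf.
have f0 : forall x, 0 <= f x by case: pdf.
set t := Num.sqrt (golomb_igf f alpha).
have t0 : 0 < t by rewrite sqrtr_gt0.
have tt : t ^+ 2 = golomb_igf f alpha by rewrite sqr_sqrtr // ltW.
have [il Il] := int_lin (2^-1 * t) (2^-1 * t^-1) intf ia.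
have pt : forall x, f x `^ ((alpha + 1) / 2) <=
    2^-1 * t * f x + 2^-1 * t^-1 * f x `^ alpha.
  move=> x.
  set a := f x `^ (2^-1); set b := f x `^ (alpha / 2).
  have e1 : f x `^ ((alpha + 1) / 2) = a * b.
    rewrite /a /b -powRD; first by congr powR; field.
    by apply/implyP => /eqP; lra.
  have e2 : a * a = f x.
    rewrite /a -powRD; last by apply/implyP => /eqP; lra.
    have -> : (2^-1 + 2^-1 : R) = 1 by field.
    by rewrite powRr1.
  have e3 : b * b = f x `^ alpha.
    rewrite /b -powRD; last by apply/implyP => /eqP; lra.
    by congr powR; field.
  rewrite e1 -e3 -e2.
  have : 0 <= (t * a - b) ^+ 2 by apply: sqr_ge0.
  move=> H.
  have H2 : 2 * t * (a * b) <= t ^+ 2 * (a * a) + b * b by nra.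
  have -> : 2^-1 * t * (a * a) + 2^-1 * t^-1 * (b * b) =
            (t ^+ 2 * (a * a) + b * b) / (2 * t) by field; rewrite gt_eqF.
  rewrite ler_pdivlMr ?mulr_gt0 //; nra.
have := le_Rintegral _ im il (fun x _ => pt x).
rewrite Il I1 -/(golomb_igf f alpha) -/(golomb_igf f ((alpha + 1) / 2)).
rewrite -tt mulr1 => H.
have : golomb_igf f ((alpha + 1) / 2) <= t.
  apply: (le_trans (H (measurable_itv _))); rewrite le_eqVlt; apply/orP; left; apply/eqP.
  by field; rewrite gt_eqF.
move=> H3.
by rewrite ler_pXn2r // ?nnegrE ltW.
Qed.

Lemma J_gen (R : realType) (f : R -> R) (alpha beta : R) (convex : bool) :
  nonneg_pdf f -> 0 < alpha ->
  igf_finite f alpha -> igf_finite f (alpha * beta - alpha - beta + 2) ->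
  (if convex then (1 <= beta - 1 \/ beta - 1 <= 0)
   else (1 < alpha /\ 0 <= beta - 1 <= 1)) ->
  if convex then golomb_igf f alpha `^ (beta - 1) <= golomb_igf f (alpha * beta - alpha - beta + 2)
  else golomb_igf f (alpha * beta - alpha - beta + 2) <= golomb_igf f alpha `^ (beta - 1).
Proof.
move=> pdf a0 ia il hc.
set m := golomb_igf f alpha.
have m0 : 0 < m := G_pos pdf ia.
have [intf I1] := pdf_int pdf.
have f0 : forall x, 0 <= f x by case: pdf.
set p := beta - 1.
set B := p * (m `^ p / m).
set A := m `^ p - B * m.
have [iAB IAB] := int_lin A B intf ia.
have Ieq : Rintegral mu D (fun x => A * f x + B * f x `^ alpha) = m `^ p.
  by rewrite IAB I1 -/(golomb_igf f alpha) -/m /A; ring.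
have el : alpha * beta - alpha - beta + 2 = 1 + (alpha - 1) * p.
  by rewrite /p; ring.
have key : forall x, 0 < f x ->
  A * f x + B * f x `^ alpha = f x * (m `^ p + B * (f x `^ (alpha - 1) - m)) /\
  f x `^ (alpha * beta - alpha - beta + 2) = f x * (f x `^ (alpha - 1)) `^ p.
  move=> x fx; split.
    rewrite -(mulr_powRB1 (f0 x) a0) /A; ring.
  rewrite el.
  rewrite (@powRD _ (f x) 1 ((alpha - 1) * p)); last by apply/implyP => _; rewrite gt_eqF.
  by rewrite powRr1 ?f0 // powRrM.
case: convex hc => hc.
  have pt : forall x, A * f x + B * f x `^ alpha <=
                      f x `^ (alpha * beta - alpha - beta + 2).
    move=> x; have := f0 x; rewrite le_eqVlt => /orP[/eqP fx|fx].
      rewrite -fx powR0 ?gt_eqF // !mulr0 addr0; exact: powR_ge0.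
    have [-> ->] := key x fx.
    rewrite ler_pM2l //; apply: tangent_convex => //.
    exact: powR_gt0.
  have := le_Rintegral _ iAB il (fun x _ => pt x).
  by rewrite Ieq => /(_ (measurable_itv _)).
have l0 : alpha * beta - alpha - beta + 2 != 0.
  rewrite el; case: hc => a1 /andP[p0 _]; apply/eqP => H.
  have : 0 <= (alpha - 1) * p by apply: mulr_ge0 => //; lra.
  lra.
have pt : forall x, f x `^ (alpha * beta - alpha - beta + 2) <=
                    A * f x + B * f x `^ alpha.
  move=> x; have := f0 x; rewrite le_eqVlt => /orP[/eqP fx|fx].
    by rewrite -fx (powR0 l0) (powR0 (lt0r_neq0 a0)) !mulr0 addr0.
  have [-> ->] := key x fx.
  rewrite ler_pM2l //; apply: tangent_concave => //.
    exact: powR_gt0.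
  by case: hc.
have := le_Rintegral _ il iAB (fun x _ => pt x).
by rewrite Ieq => /(_ (measurable_itv _)).
Qed.

Unset Implicit Arguments.
Theorem proposition2p3 (R : realType) (f : R -> R) (alpha beta : R) :
  nonneg_pdf f ->
  0 < alpha -> alpha != 1 -> 0 < beta ->
  let l := alpha * beta - alpha - beta + 2 in
  let delta := (1 - alpha)^-1 in
  igf_finite f alpha ->
  igf_finite f l ->
  igf_finite f ((alpha + 1) / 2) ->
  (* (A) 0 < alpha < 1 *)
  (alpha < 1 ->
     ((beta < 1 \/ 2 <= beta) ->
        renyi_igf f alpha beta <= delta * golomb_igf f l) /\
     (1 <= beta ->
        renyi_igf f alpha beta >= 2^-1 * renyi_igf f ((alpha + 1) / 2) (2 * beta - 1)) /\
     (beta < 1 ->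
        renyi_igf f alpha beta <= 2^-1 * renyi_igf f ((alpha + 1) / 2) (2 * beta - 1))) /\
  (* (B) alpha > 1 *)
  (1 < alpha ->
     ((1 < beta < 2) ->
        renyi_igf f alpha beta <= delta * golomb_igf f l) /\
     (1 <= beta ->
        renyi_igf f alpha beta <= 2^-1 * renyi_igf f ((alpha + 1) / 2) (2 * beta - 1)) /\
     (beta < 1 ->
        renyi_igf f alpha beta >= 2^-1 * renyi_igf f ((alpha + 1) / 2) (2 * beta - 1))).
Proof.
move=> pdf a0 a1 b0 l delta ia il im.
have Gp := G_pos pdf ia.
have Gmp := G_pos pdf im.
have cs := CS pdf a0 ia im.
set Ga := golomb_igf f alpha in Gp cs *.
set Gm := golomb_igf f ((alpha + 1) / 2) in Gmp cs *.
have Jc := @J_gen R f alpha beta true pdf a0 ia il.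
have Jk := @J_gen R f alpha beta false pdf a0 ia il.
rewrite /= -/Ga in Jc Jk.
have rA : renyi_igf f alpha beta = delta * Ga `^ (beta - 1) by [].
have d1 : 1 - alpha != 0 by rewrite subr_eq0 eq_sym.
have rM : 2^-1 * renyi_igf f ((alpha + 1) / 2) (2 * beta - 1) =
          delta * (Gm ^+ 2) `^ (beta - 1).
  rewrite /renyi_igf -/Gm -powR_mulrn ?(ltW Gmp) // -powRrM.
  have -> : (2%:R * (beta - 1) : R) = 2 * beta - 1 - 1 by ring.
  rewrite mulrA /delta; congr (_ * _); field.
  by rewrite d1.
have G2p : 0 < Gm ^+ 2 by rewrite exprn_gt0.
have up : 1 <= beta -> (Gm ^+ 2) `^ (beta - 1) <= Ga `^ (beta - 1).
  move=> b1; apply: ge0_ler_powR; rewrite ?nnegrE ?(ltW G2p) ?(ltW Gp) //.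
  by rewrite subr_ge0.
have down : beta < 1 -> Ga `^ (beta - 1) <= (Gm ^+ 2) `^ (beta - 1).
  move=> b1; have -> : beta - 1 = - (1 - beta) by ring.
  rewrite !powRN ler_pV2 ?inE ?unitfE ?powR_gt0 ?andbT ?gt_eqF ?powR_gt0 //.
  apply: ge0_ler_powR; rewrite ?nnegrE ?(ltW G2p) ?(ltW Gp) //.
  by rewrite subr_ge0 ltW.
rewrite rA rM; split => ha.
  have dp : 0 < delta by rewrite /delta invr_gt0 subr_gt0.
  split; [|split].
  - move=> hb; apply: ler_wpM2l; first exact: ltW.
    have hb' : 1 <= beta - 1 \/ beta - 1 <= 0.
      by case: hb => hb; [right|left]; clear -hb; lra.
    move: (Jc hb') => /= H. exact H.
  - by move=> hb; have H := ler_wpM2l (ltW dp) (up hb); exact H.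
  - by move=> hb; have H := ler_wpM2l (ltW dp) (down hb); exact H.
have dn : delta < 0 by rewrite /delta invr_lt0 subr_lt0.
split; [|split].
- move=> /andP[hb1 hb2]; apply: ler_wnM2l; first exact: ltW.
  have hb' : 1 < alpha /\ 0 <= beta - 1 <= 1.
    split => //; apply/andP; split; clear -hb1 hb2; lra.
  move: (Jk hb') => /= H. exact H.
- by move=> hb; have H := ler_wnM2l (ltW dn) (up hb); exact H.
- by move=> hb; have H := ler_wnM2l (ltW dn) (down hb); exact H.
Qed.
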